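(* Let $x_0\in\mathbb{R}^2$, $r_0>0$ and $0<\varepsilon_0<1/100$, and let $K$ be a relatively closed subset of $B(x_0,r_0)$ containing $x_0$. Assume that $\beta^{\rm bil}_K(x,r)\le\varepsilon_0$ for all $x\in K\cap B(x_0,r_0/2)$ and all $0<r\le r_0/2$. Then $K$ separates $B(x_0,r_0/10)$.
   Context: $B(x,r)$ is the open ball. For a set $F$ and $x\in F$: flatness $\beta_F(x,r)=r^{-1}\inf_\ell\sup_{y\in F\cap B(x,r)}\mathrm{dist}(y,\ell)$ and bilateral flatness $\beta^{\rm bil}_F(x,r)=r^{-1}\inf_\ell\max\{\sup_{y\in F\cap B(x,r)}\mathrm{dist}(y,\ell),\sup_{y\in\ell\cap B(x,r)}\mathrm{dist}(y,F)\}$, infima over lines $\ell$ through $x$. With $\nu(x,r)$ a unit normal of a line attaining the infimum in $\beta_F(x,r)$ and $D^\pm_t(x,r)=\{z\in B(x,r):\pm(z-x)\cdot\nu(x,r)>t\}$, $F$ separates $B(x,r)$ if $\beta:=\beta_F(x,r)\le1/2$ and $D^+_{\beta r}(x,r)$, $D^-_{\beta r}(x,r)$ lie in distinct connected components of $B(x,r)\setminus F$. *)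

(* Defs.v *)
(* The plane R^2 is modelled as R * R (R : realType)
   with the product topology (= Euclidean topology) and the Euclidean metric. *)
From HB Require Import structures.
From mathcomp Require Import all_boot all_order all_algebra.
From mathcomp Require Import all_classical all_reals all_analysis.
Set Implicit Arguments. Unset Strict Implicit. Unset Printing Implicit Defensive.
Import Order.TTheory GRing.Theory Num.Theory.
Import numFieldNormedType.Exports.
Local Open Scope classical_set_scope.
Local Open Scope ring_scope.

Section Flatness.
Variable R : realType.
Implicit Types (x y z v : R * R) (F : set (R * R)) (r t : R).

Definition edist x y : R := Num.sqrt ((x.1 - y.1) ^+ 2 + (x.2 - y.2) ^+ 2).
Definition eball x r : set (R * R) := [set y | edist y x < r].

Definition unitv v : Prop := v.1 ^+ 2 + v.2 ^+ 2 = 1.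

(* signed / unsigned distance from y to the line through x with unit normal v *)
Definition sdot x v y : R := (y.1 - x.1) * v.1 + (y.2 - x.2) * v.2.
Definition ldist x v y : R := `| sdot x v y |.

Definition flat_width F x r v : R := sup [set ldist x v y | y in F `&` eball x r].

Definition beta F x r : R := r^-1 * inf [set flat_width F x r v | v in unitv].

Definition setdist y F : R := inf [set edist y z | z in F].

Definition bil_width F x r v : R :=
  Num.max (flat_width F x r v)
          (sup [set setdist y F | y in [set y | sdot x v y = 0] `&` eball x r]).

Definition beta_bil F x r : R := r^-1 * inf [set bil_width F x r v | v in unitv].

Definition optimal_normal F x r v : Prop :=
  unitv v /\ flat_width F x r v = inf [set flat_width F x r w | w in unitv].

Definition Dplus x r v t : set (R * R) := [set z | eball x r z /\ sdot x v z > t].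
Definition Dminus x r v t : set (R * R) := [set z | eball x r z /\ - sdot x v z > t].

Definition distinct_components (U A B : set (R * R)) : Prop :=
  [/\ exists p, A `<=` connected_component U p,
      exists q, B `<=` connected_component U q &
      forall a b, A a -> B b -> ~ connected_component U a b].

Definition separates F x r : Prop :=
  beta F x r <= 1/2 /\
  (exists v, optimal_normal F x r v) /\
  forall v, optimal_normal F x r v ->
    distinct_components (eball x r `\` F)
      (Dplus x r v (beta F x r * r)) (Dminus x r v (beta F x r * r)).

Definition rel_closed (K U : set (R * R)) : Prop :=
  K `<=` U /\ exists C : set (R * R), closed C /\ K = C `&` U.

End Flatness.

(* Main.v *)
Require Import Defs.
From HB Require Import structures.
From mathcomp Require Import all_boot all_order all_algebra.
From mathcomp Require Import all_classical all_reals all_analysis.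
From mathcomp Require Import ring lra.
Import Defs.
Import Order.TTheory GRing.Theory Num.Theory.
Import numFieldNormedType.Exports.
Local Open Scope classical_set_scope.
Local Open Scope ring_scope.

Section Geo.
Context {R : realType}.
Implicit Types (x y z u v a b c n : R * R).

Definition dot u v : R := u.1 * v.1 + u.2 * v.2.
Definition cr u v : R := u.1 * v.2 - u.2 * v.1.

Lemma edist_sq x y : edist x y ^+ 2 = (x.1 - y.1) ^+ 2 + (x.2 - y.2) ^+ 2.
Proof. by rewrite /edist sqr_sqrtr // addr_ge0 // sqr_ge0. Qed.

Lemma edist_ge0 x y : 0 <= edist x y. Proof. exact: sqrtr_ge0. Qed.

Lemma edist_sym x y : edist x y = edist y x.
Proof. by rewrite /edist; congr Num.sqrt; ring. Qed.

Lemma edist_xx x : edist x x = 0.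
Proof. by rewrite /edist !subrr expr0n /= addr0 sqrtr0. Qed.

Lemma le_of_sq (s e : R) : 0 <= e -> s ^+ 2 <= e ^+ 2 -> s <= e.
Proof. move=> he h; nra. Qed.

Lemma abs_le_of_sq (s e : R) : 0 <= e -> s ^+ 2 <= e ^+ 2 -> `|s| <= e.
Proof. move=> he h; rewrite ler_norml; apply/andP; split; nra. Qed.

Lemma edist_le x y e : 0 <= e ->
  (x.1 - y.1) ^+ 2 + (x.2 - y.2) ^+ 2 <= e ^+ 2 -> edist x y <= e.
Proof. move=> he h; apply: le_of_sq => //; by rewrite edist_sq. Qed.

Lemma edist_lt x y e : 0 <= e ->
  (x.1 - y.1) ^+ 2 + (x.2 - y.2) ^+ 2 < e ^+ 2 -> edist x y < e.
Proof.
move=> he h; have := edist_ge0 x y; rewrite -edist_sq in h => h0; nra.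
Qed.

Lemma edist_ge x y e : 0 <= e ->
  e ^+ 2 <= (x.1 - y.1) ^+ 2 + (x.2 - y.2) ^+ 2 -> e <= edist x y.
Proof. move=> he h; have := edist_ge0 x y; rewrite -edist_sq in h => h0; nra. Qed.

Lemma edist_sq_lt x y e : edist x y < e ->
  (x.1 - y.1) ^+ 2 + (x.2 - y.2) ^+ 2 < e ^+ 2.
Proof. move=> h; have := edist_ge0 x y; rewrite -edist_sq => h0; nra. Qed.

Lemma edist_sq_le x y e : edist x y <= e ->
  (x.1 - y.1) ^+ 2 + (x.2 - y.2) ^+ 2 <= e ^+ 2.
Proof. move=> h; have := edist_ge0 x y; rewrite -edist_sq => h0; nra. Qed.

Lemma cs_vec (a1 a2 b1 b2 : R) : (a1 * b1 + a2 * b2) ^+ 2 <= (a1^+2 + a2^+2) * (b1^+2 + b2^+2).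
Proof.
have -> : (a1^+2 + a2^+2) * (b1^+2 + b2^+2) = (a1 * b1 + a2 * b2) ^+ 2 + (a1*b2 - a2*b1)^+2 by ring.
by rewrite lerDl sqr_ge0.
Qed.

Lemma edist_tri x y z : edist x z <= edist x y + edist y z.
Proof.
apply: edist_le; first by rewrite addr_ge0 // edist_ge0.
have h1 := edist_sq x y; have h2 := edist_sq y z.
have p0 := edist_ge0 x y; have q0 := edist_ge0 y z.
set p := edist x y in h1 p0 *; set q := edist y z in h2 q0 *.
have cs := cs_vec (x.1 - y.1) (x.2 - y.2) (y.1 - z.1) (y.2 - z.2).
rewrite -h1 -h2 in cs.
have hd : (x.1 - y.1) * (y.1 - z.1) + (x.2 - y.2) * (y.2 - z.2) <= p * q.
  apply: le_of_sq; first exact: mulr_ge0.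
  by rewrite exprMn.
have -> : (x.1 - z.1) ^+ 2 + (x.2 - z.2) ^+ 2 = ((x.1 - y.1) ^+ 2 + (x.2 - y.2) ^+ 2)
   + ((y.1 - z.1) ^+ 2 + (y.2 - z.2) ^+ 2)
   + 2 * ((x.1 - y.1) * (y.1 - z.1) + (x.2 - y.2) * (y.2 - z.2)) by ring.
rewrite -h1 -h2; nra.
Qed.

Lemma sdot_cs x v y : unitv v -> `|sdot x v y| <= edist y x.
Proof.
rewrite /unitv /sdot => hv; apply: abs_le_of_sq; first exact: edist_ge0.
rewrite edist_sq; have := cs_vec (y.1 - x.1) (y.2 - x.2) v.1 v.2.
by rewrite hv mulr1.
Qed.

Lemma dot_cr_unit a b : unitv a -> unitv b -> dot a b ^+ 2 + cr a b ^+ 2 = 1.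
Proof.
rewrite /unitv /dot /cr => ha hb.
have -> : (a.1 * b.1 + a.2 * b.2) ^+ 2 + (a.1 * b.2 - a.2 * b.1) ^+ 2 =
  (a.1 ^+ 2 + a.2 ^+ 2) * (b.1 ^+ 2 + b.2 ^+ 2) by ring.
by rewrite ha hb mulr1.
Qed.

Lemma alg_cmp n n' (u1 u2 : R) : unitv n -> unitv n' ->
  cr n n' ^+ 2 * (u1 ^+ 2 + u2 ^+ 2) <=
  (`|u1 * n.1 + u2 * n.2| + `|u1 * n'.1 + u2 * n'.2|) ^+ 2.
Proof.
move=> hn hn'; have hd := dot_cr_unit _ _ hn hn'.
move: hn hn' hd; rewrite /unitv /dot /cr => hn hn' hd.
set A := u1 * n.1 + u2 * n.2; set B := u1 * n'.1 + u2 * n'.2.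
set D := n.1 * n'.1 + n.2 * n'.2.
have e : (n.1 * n'.2 - n.2 * n'.1) ^+ 2 * (u1 ^+ 2 + u2 ^+ 2) =
  A ^+ 2 * (n'.1 ^+ 2 + n'.2 ^+ 2) + B ^+ 2 * (n.1 ^+ 2 + n.2 ^+ 2) - 2 * A * B * D.
  rewrite /A /B /D; ring.
rewrite e hn hn' !mulr1.
have hD : D ^+ 2 <= 1 by rewrite -hd lerDl sqr_ge0.
have hAB : - (A * B * D) <= `|A| * `|B|.
  have : `|A * B * D| <= `|A| * `|B|.
    rewrite !normrM -[X in _ <= X]mulr1 ler_wpM2l ?mulr_ge0 //.
    by apply: abs_le_of_sq => //; rewrite expr1n.
  move=> h; apply: le_trans h; rewrite -normrN; exact: ler_norm.
have -> : (`|A| + `|B|) ^+ 2 = A ^+ 2 + B ^+ 2 + 2 * (`|A| * `|B|).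
  by rewrite sqrrD !real_normK ?num_real //; ring.
lra.
Qed.

Lemma sgn_comb {a b c} : unitv a -> unitv b -> unitv c ->
  cr a b ^+ 2 <= 1/10 -> cr b c ^+ 2 <= 1/10 -> 0 < dot a b -> 0 < dot b c ->
  0 < dot a c.
Proof.
move=> ha hb hc h1 h2 p1 p2.
have e1 := dot_cr_unit _ _ ha hb; have e2 := dot_cr_unit _ _ hb hc.
have e : dot a c = dot a b * dot b c - cr a b * cr b c.
  move: hb; rewrite /unitv /dot /cr => hb.
  have -> : a.1 * c.1 + a.2 * c.2 = (a.1 * c.1 + a.2 * c.2) * (b.1 ^+ 2 + b.2 ^+ 2) by rewrite hb mulr1.
  ring.
rewrite e.
set P := dot a b in e1 p1 *; set Q := dot b c in e2 p2 *.
set X := cr a b in e1 h1 *; set Y := cr b c in e2 h2 *.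
have hP : 9/10 <= P ^+ 2 by lra.
have hQ : 9/10 <= Q ^+ 2 by lra.
have hPQ2 : (9/10) * (9/10) <= P ^+ 2 * Q ^+ 2 by apply: ler_pM => //; lra.
have hPQ : 9/10 <= P * Q.
  apply: le_of_sq; first by apply: mulr_ge0; lra.
  rewrite exprMn; lra.
have hXY2 : X ^+ 2 * Y ^+ 2 <= (1/10) * (1/10) by apply: ler_pM => //; apply: sqr_ge0.
have hXY : `|X * Y| <= 1/10.
  apply: abs_le_of_sq; first lra.
  rewrite exprMn; lra.
have := ler_norm (X * Y) => h.
lra.
Qed.

Lemma dot_pos {a b} : unitv a -> unitv b -> 0 <= dot a b -> cr a b ^+ 2 <= 1/10 ->
  0 < dot a b.
Proof.
move=> ha hb h0 h; have e := dot_cr_unit _ _ ha hb.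
rewrite lt_neqAle h0 andbT; apply/negP => /eqP h1.
rewrite -h1 expr0n /= add0r in e; lra.
Qed.

Lemma dot_close {a b} : unitv a -> unitv b -> 0 < dot a b -> cr a b ^+ 2 <= 1/100 ->
  99/100 <= dot a b.
Proof.
move=> ha hb h0 h; have e := dot_cr_unit _ _ ha hb.
have : dot a b ^+ 2 <= 1 by rewrite -e lerDl sqr_ge0.
move=> h1; nra.
Qed.

Lemma dot_sym a b : dot a b = dot b a.
Proof. rewrite /dot; ring. Qed.
Lemma cr_sq_sym a b : cr a b ^+ 2 = cr b a ^+ 2.
Proof. rewrite /cr; ring. Qed.

End Geo.

Section Geo2.
Context {R : realType}.
Implicit Types (x y z u v a b c n : R * R).

Lemma sq_le (p q : R) : 0 <= p -> p <= q -> p ^+ 2 <= q ^+ 2.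
Proof. move=> h1 h2; nra. Qed.

Lemma cmp_gen n n' y y' q1 q2 (aa bb L : R) : unitv n -> unitv n' ->
  `|sdot y n q1| <= aa -> `|sdot y n q2| <= aa ->
  `|sdot y' n' q1| <= bb -> `|sdot y' n' q2| <= bb ->
  0 <= L -> L <= edist q1 q2 -> cr n n' ^+ 2 * L ^+ 2 <= (2 * aa + 2 * bb) ^+ 2.
Proof.
move=> hn hn' h1 h2 h3 h4 hL hLe.
have := alg_cmp n n' (q1.1 - q2.1) (q1.2 - q2.2) hn hn'.
have eA : (q1.1 - q2.1) * n.1 + (q1.2 - q2.2) * n.2 = sdot y n q1 - sdot y n q2.
  rewrite /sdot; ring.
have eB : (q1.1 - q2.1) * n'.1 + (q1.2 - q2.2) * n'.2 = sdot y' n' q1 - sdot y' n' q2.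
  rewrite /sdot; ring.
rewrite eA eB -edist_sq => h.
have hA : `|sdot y n q1 - sdot y n q2| <= 2 * aa.
  apply: le_trans (ler_normB _ _) _; lra.
have hB : `|sdot y' n' q1 - sdot y' n' q2| <= 2 * bb.
  apply: le_trans (ler_normB _ _) _; lra.
have hL2 : L ^+ 2 <= edist q1 q2 ^+ 2 by apply: sq_le.
apply: le_trans (le_trans _ h) _.
  by apply: ler_wpM2l => //; apply: sqr_ge0.
have n0 := normr_ge0 (sdot y n q1 - sdot y n q2).
have n1 := normr_ge0 (sdot y' n' q1 - sdot y' n' q2).
apply: sq_le; lra.
Qed.

Lemma nbhs_edist z e : 0 < e -> nbhs z [set w | edist z w < e].
Proof.
move=> e0; apply: filterS (nbhsx_ballx z (e / 2) _); last by lra.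
case: z => z1 z2 [w1 w2]; rewrite /ball /= => -[h1 h2].
apply: edist_lt; first lra.
rewrite /=.
have g1 : (z1 - w1) ^+ 2 < (e/2) ^+ 2 by rewrite -real_normK ?num_real // ltr_sqr ?nnegrE //; lra.
have g2 : (z2 - w2) ^+ 2 < (e/2) ^+ 2 by rewrite -real_normK ?num_real // ltr_sqr ?nnegrE //; lra.
have : (e/2) ^+ 2 = e ^+ 2 / 4 by rewrite expr_div_n; congr (_ / _); rewrite expr2; lra.
move=> ee; rewrite ee in g1 g2; have : 0 < e ^+ 2 by rewrite exprn_gt0.
lra.
Qed.

Lemma loc_const_connected (T : topologicalType) (f : T -> bool) (U C : set T) :
  (forall t : T, U t -> nbhs t [set w | f w = f t]) ->
  connected C -> C `<=` U -> forall a b : T, C a -> C b -> f a = f b.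
Proof.
move=> hloc hC hCU a b Ca Cb.
pose B := C `&` [set w | f w = f a].
have hB : B = C.
  apply: hC.
  - by exists a.
  - exists ([set w | f w = f a])°; first exact: open_interior.
    rewrite /B; apply/seteqP; split => w [Cw hw]; split => //.
      by rewrite /interior /=; rewrite -hw; exact: hloc (hCU _ Cw).
    exact: (nbhs_singleton hw).
  - exists (~` ([set w | f w <> f a])°); first exact/open_closedC/open_interior.
    rewrite /B; apply/seteqP; split => w [Cw hw]; split => //.
      move=> /nbhs_singleton /=; by [].
    case: (boolP (f w == f a)) => [/eqP //|/eqP hne].
    exfalso; apply: hw; rewrite /interior /=.
    apply: filterS (hloc _ (hCU _ Cw)) => w' /= ->; exact: hne.
have : B b by rewrite hB.
by case => _ ->.
Qed.

End Geo2.

Section Geo3.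
Context {R : realType}.
Implicit Types (x y z u v a b c n : R * R).

Definition segp a b (t : R) : R * R := (a.1 + t * (b.1 - a.1), a.2 + t * (b.2 - a.2)).

Lemma segp_cont a b : continuous (segp a b).
Proof.
move=> t.
have h1 : (fun x : R => a.1 + x * (b.1 - a.1)) @ t --> a.1 + t * (b.1 - a.1).
  apply: cvgD; first exact: cvg_cst.
  by apply: cvgMl; exact: cvg_id.
have h2 : (fun x : R => a.2 + x * (b.2 - a.2)) @ t --> a.2 + t * (b.2 - a.2).
  apply: cvgD; first exact: cvg_cst.
  by apply: cvgMl; exact: cvg_id.
exact: (cvg_pair h1 h2).
Qed.

Lemma seg_connected a b : connected [set segp a b t | t in `[0, 1]].
Proof.
apply: connected_continuous_connected; first exact: segment_connected.
apply: continuous_subspaceT; exact: segp_cont.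
Qed.

Lemma segp0 a b : segp a b 0 = a.
Proof. by case: a => a1 a2; rewrite /segp /= !mul0r !addr0. Qed.
Lemma segp1 a b : segp a b 1 = b.
Proof. by case: a b => a1 a2 [b1 b2]; rewrite /segp /= !mul1r; congr pair; rewrite addrC subrK. Qed.

Lemma segp_dist a b c t : 0 <= t <= 1 ->
  edist (segp a b t) c <= (1 - t) * edist a c + t * edist b c.
Proof.
move=> /andP[t0 t1].
have pa := edist_ge0 a c; have pb := edist_ge0 b c.
apply: edist_le; first by apply: addr_ge0; apply: mulr_ge0 => //; lra.
have ha := edist_sq a c; have hb := edist_sq b c.
set P := edist a c in pa ha *; set Q := edist b c in pb hb *.
have cs := cs_vec (a.1 - c.1) (a.2 - c.2) (b.1 - c.1) (b.2 - c.2).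
rewrite -ha -hb in cs.
have hd : (a.1 - c.1) * (b.1 - c.1) + (a.2 - c.2) * (b.2 - c.2) <= P * Q.
  apply: le_of_sq; first exact: mulr_ge0.
  by rewrite exprMn.
rewrite /segp /=.
have -> : (a.1 + t * (b.1 - a.1) - c.1) ^+ 2 + (a.2 + t * (b.2 - a.2) - c.2) ^+ 2 =
  (1 - t) ^+ 2 * ((a.1 - c.1) ^+ 2 + (a.2 - c.2) ^+ 2) + t ^+ 2 * ((b.1 - c.1) ^+ 2 + (b.2 - c.2) ^+ 2)
  + 2 * (t * (1 - t)) * ((a.1 - c.1) * (b.1 - c.1) + (a.2 - c.2) * (b.2 - c.2)) by ring.
rewrite -ha -hb.
have htt : 0 <= t * (1 - t) by apply: mulr_ge0; lra.
have : 2 * (t * (1 - t)) * ((a.1 - c.1) * (b.1 - c.1) + (a.2 - c.2) * (b.2 - c.2)) <=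
       2 * (t * (1 - t)) * (P * Q).
  by apply: ler_wpM2l => //; lra.
move=> h; have -> : ((1 - t) * P + t * Q) ^+ 2 = (1 - t) ^+ 2 * P ^+ 2 + t ^+ 2 * Q ^+ 2 + 2 * (t * (1 - t)) * (P * Q) by ring.
lra.
Qed.

Lemma segp_sdot x v a b t : sdot x v (segp a b t) = (1 - t) * sdot x v a + t * sdot x v b.
Proof. rewrite /sdot /segp /=; ring. Qed.

End Geo3.

Section Main1.
Context {R : realType}.
Implicit Types (x y z u v a b c n p q w : R * R).
Variables (x0 : R * R) (r eps0 : R) (K : set (R * R)).
Hypotheses (hr : 0 < r) (he0 : 0 < eps0) (he1 : eps0 < 1/100) (Kx0 : K x0).
Hypothesis hbil : forall x rho, K x -> edist x x0 < 5 * r -> 0 < rho -> rho <= 5 * r ->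
  beta_bil K x rho <= eps0.

Local Ltac slra := have := hr; have := he0; have := he1; move=> ? ? ?; lra.
Local Ltac snra := have := hr; have := he0; have := he1; move=> ? ? ?; nra.

Lemma ldist_le x v y : unitv v -> ldist x v y <= edist y x.
Proof. exact: sdot_cs. Qed.

Lemma fw_has_sup {x rho v} : K x -> 0 < rho -> unitv v ->
  has_sup [set ldist x v y | y in K `&` eball x rho].
Proof.
move=> Kx h0 hv; split.
  by exists (ldist x v x), x => //; split => //; rewrite /eball /= edist_xx.
exists rho => _ [y [Ky hy] <-]; apply: le_trans (ldist_le _ _ _ hv) _.
by apply/ltW.
Qed.

Lemma fw_ub {x rho v y} : K x -> 0 < rho -> unitv v -> K y -> edist y x < rho ->
  ldist x v y <= flat_width K x rho v.
Proof.
move=> Kx h0 hv Ky hy; apply: sup_upper_bound; first exact: fw_has_sup.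
by exists y.
Qed.

Lemma fw_ge0 {x rho v} : K x -> 0 < rho -> unitv v -> 0 <= flat_width K x rho v.
Proof.
move=> Kx h0 hv; apply: le_trans _ (fw_ub Kx h0 hv Kx _); first exact: normr_ge0.
by rewrite edist_xx.
Qed.

Lemma fw_le {x rho v} (cc : R) : K x -> 0 < rho ->
  (forall y, K y -> edist y x < rho -> ldist x v y <= cc) -> flat_width K x rho v <= cc.
Proof.
move=> Kx h0 h; apply: ge_sup.
  by exists (ldist x v x), x => //; split => //; rewrite /eball /= edist_xx.
by move=> _ [y [Ky hy] <-]; apply: h.
Qed.

Lemma sd_has_inf y : has_inf [set edist y q | q in K].
Proof.
split; first by exists (edist y x0), x0.
by exists 0 => _ [q _ <-]; exact: edist_ge0.
Qed.

Lemma sd_lb y {q} : K q -> setdist y K <= edist y q.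
Proof.
move=> Kq; apply: ge_inf; first by exists 0 => _ [q' _ <-]; exact: edist_ge0.
by exists q.
Qed.

Lemma sd_ge0 y : 0 <= setdist y K.
Proof.
apply: lb_le_inf; first by exists (edist y x0), x0.
by move=> _ [q _ <-]; exact: edist_ge0.
Qed.

Lemma sd_adh y e : 0 < e -> exists2 q, K q & edist y q < setdist y K + e.
Proof.
move=> e0; have [_ [q Kq <-] h] := inf_adherent e0 (sd_has_inf y).
by exists q.
Qed.

Lemma sd_lip y y' : setdist y K <= setdist y' K + edist y y'.
Proof.
rewrite -lerBlDr; apply: lb_le_inf; first by exists (edist y' x0), x0.
move=> _ [q Kq <-]; rewrite lerBlDr.
apply: le_trans (sd_lb y Kq) _.
by apply: le_trans (edist_tri y y' q) _; rewrite addrC.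
Qed.

Lemma ln_has_sup {x rho} v : K x -> 0 < rho ->
  has_sup [set setdist y K | y in [set y | sdot x v y = 0] `&` eball x rho].
Proof.
move=> Kx h0; split.
  exists (setdist x K), x => //; split; last by rewrite /eball /= edist_xx.
  by rewrite /= /sdot !subrr !mul0r addr0.
exists rho => _ [y [_ hy] <-]; apply: le_trans (sd_lb y Kx) _.
exact/ltW.
Qed.

Definition good y rho v : Prop :=
  [/\ unitv v,
      (forall q, K q -> edist q y < rho -> `|sdot y v q| < rho / 100) &
      (forall p, sdot y v p = 0 -> edist p y < rho -> exists2 q, K q & edist p q < rho / 100)].

Lemma good_of_bil {y rho v} : K y -> 0 < rho -> unitv v ->
  bil_width K y rho v < rho / 100 -> good y rho v.
Proof.
move=> Ky h0 hv hb; split => //.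
  move=> q Kq hq; apply: le_lt_trans (fw_ub Ky h0 hv Kq hq) _.
  by apply: le_lt_trans hb; rewrite /bil_width le_max lexx.
move=> p hp hpy.
have hs : setdist p K < rho / 100.
  apply: le_lt_trans hb; rewrite /bil_width le_max; apply/orP; right.
  apply: sup_upper_bound; first exact: ln_has_sup.
  by exists p.
have e0 : 0 < rho / 100 - setdist p K by rewrite subr_gt0.
have [q Kq hq] := sd_adh p _ e0.
by exists q => //; move: hq; rewrite addrC subrK.
Qed.

Lemma unit10 : unitv ((1 : R), (0 : R)).
Proof. by rewrite /unitv /= expr1n expr0n /= addr0. Qed.

Lemma bw_ge0 {x rho v} : K x -> 0 < rho -> unitv v -> 0 <= bil_width K x rho v.
Proof.
move=> Kx h0 hv; apply: le_trans (fw_ge0 Kx h0 hv) _.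
by rewrite /bil_width le_max lexx.
Qed.

Lemma exists_good {y rho} : K y -> edist y x0 < 5 * r -> 0 < rho -> rho <= 5 * r ->
  exists v, good y rho v.
Proof.
move=> Ky hy h0 h5; have hb := hbil _ _ Ky hy h0 h5.
set S := [set bil_width K y rho v | v in @unitv R].
have hS : has_inf S.
  split; first by exists (bil_width K y rho (1, 0)), (1, 0) => //; exact: unit10.
  by exists 0 => _ [v hv <-]; exact: bw_ge0.
have hi : inf S < rho / 100.
  move: hb; rewrite /beta_bil -/S => hb.
  have ee : inf S = rho * (rho^-1 * inf S) by rewrite mulrA divff ?mul1r // gt_eqF.
  have : inf S <= rho * eps0 by rewrite ee; apply: ler_wpM2l => //; exact: ltW.
  move=> h; have h2 : rho * eps0 < rho * (1/100) by rewrite ltr_pM2l.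
  by apply: le_lt_trans h _; move: h2; rewrite mul1r.
have e0 : 0 < rho / 100 - inf S by rewrite subr_gt0.
have [_ [v hv <-] hlt] := inf_adherent e0 hS.
exists v; apply: good_of_bil => //.
by move: hlt; rewrite addrC subrK.
Qed.


Lemma scale_out (X a b rho : R) : 0 < rho -> X * (a * rho) ^+ 2 <= (b * rho) ^+ 2 ->
  X * (a * a) <= b * b.
Proof.
move=> h0 h; have h2 : 0 < rho ^+ 2 by rewrite exprn_gt0.
have h' : (X * a ^+ 2) * rho ^+ 2 <= b ^+ 2 * rho ^+ 2 by rewrite -mulrA -!exprMn.
rewrite ler_pM2r // in h'.
Qed.

Definition Ifl := inf [set flat_width K x0 r v | v in @unitv R].

Lemma Ifl_ge0 : 0 <= Ifl.
Proof.
apply: lb_le_inf; first by exists (flat_width K x0 r (1, 0)), (1, 0) => //; exact: unit10.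
by move=> _ [v hv <-]; exact: fw_ge0.
Qed.

Lemma Ifl_le : Ifl <= eps0 * r.
Proof.
set Sb := [set bil_width K x0 r v | v in @unitv R].
have h1 : Ifl <= inf Sb.
  apply: lb_le_inf; first by exists (bil_width K x0 r (1, 0)), (1, 0) => //; exact: unit10.
  move=> _ [v hv <-]; apply: le_trans (_ : flat_width K x0 r v <= _).
    apply: ge_inf; first by exists 0 => _ [w hw <-]; exact: fw_ge0.
    by exists v.
  by rewrite /bil_width le_max lexx.
have e1 : edist x0 x0 < 5 * r by rewrite edist_xx; slra.
have e2 : r <= 5 * r by slra.
have hb := hbil _ _ Kx0 e1 hr e2.
have : inf Sb <= eps0 * r.
  have ee : inf Sb = r * (r^-1 * inf Sb) by rewrite mulrA divff ?mul1r // gt_eqF.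
  rewrite ee mulrC; apply: ler_wpM2r; first exact: ltW.
  exact: hb.
move=> h; exact: le_trans h1 h.
Qed.

Lemma Ifl_lt : Ifl < r / 100.
Proof.
apply: le_lt_trans Ifl_le _.
have : eps0 * r < 1/100 * r by rewrite ltr_pM2r.
by move=> h; apply: lt_le_trans h _; rewrite mulrC; slra.
Qed.

Lemma pts y rho n (lam : R) : good y rho n -> 0 < rho -> 0 < lam -> lam < 1 ->
  exists q1, exists q2, [/\ K q1, K q2, edist q1 y < (lam + 1/100) * rho,
     edist q2 y < (lam + 1/100) * rho & (2 * lam - 1/50) * rho < edist q1 q2].
Proof.
move=> [hn hf hl] h0 l0 l1.
pose p1 := (y.1 - lam * rho * n.2, y.2 + lam * rho * n.1).
pose p2 := (y.1 + lam * rho * n.2, y.2 - lam * rho * n.1).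
have hlr : 0 <= lam * rho by apply: mulr_ge0; exact: ltW.
have ep1 : edist p1 y = lam * rho.
  rewrite /edist /p1 /=.
  have -> : (y.1 - lam * rho * n.2 - y.1) ^+ 2 + (y.2 + lam * rho * n.1 - y.2) ^+ 2
     = (lam * rho) ^+ 2 * (n.1 ^+ 2 + n.2 ^+ 2) by ring.
  by rewrite hn mulr1 sqrtr_sqr ger0_norm.
have ep2 : edist p2 y = lam * rho.
  rewrite /edist /p2 /=.
  have -> : (y.1 + lam * rho * n.2 - y.1) ^+ 2 + (y.2 - lam * rho * n.1 - y.2) ^+ 2
     = (lam * rho) ^+ 2 * (n.1 ^+ 2 + n.2 ^+ 2) by ring.
  by rewrite hn mulr1 sqrtr_sqr ger0_norm.
have ep12 : edist p1 p2 = 2 * lam * rho.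
  rewrite /edist /p1 /p2 /=.
  have -> : (y.1 - lam * rho * n.2 - (y.1 + lam * rho * n.2)) ^+ 2 +
      (y.2 + lam * rho * n.1 - (y.2 - lam * rho * n.1)) ^+ 2
     = (2 * lam * rho) ^+ 2 * (n.1 ^+ 2 + n.2 ^+ 2) by ring.
  by rewrite hn mulr1 sqrtr_sqr ger0_norm // -mulrA mulr_ge0.
have s1 : sdot y n p1 = 0 by rewrite /sdot /p1 /=; ring.
have s2 : sdot y n p2 = 0 by rewrite /sdot /p2 /=; ring.
have lr : lam * rho < rho by rewrite -[X in _ < X]mul1r ltr_pM2r.
have [q1 Kq1 hq1] := hl p1 s1 (eq_ind_r (fun t => t < rho) lr ep1).
have [q2 Kq2 hq2] := hl p2 s2 (eq_ind_r (fun t => t < rho) lr ep2).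
exists q1, q2; split => //.
- apply: le_lt_trans (edist_tri q1 p1 y) _; rewrite edist_sym ep1; slra.
- apply: le_lt_trans (edist_tri q2 p2 y) _; rewrite edist_sym ep2; slra.
- have t1 := edist_tri p1 q1 p2; have t2 := edist_tri q1 q2 p2.
  rewrite (edist_sym q2 p2) in t2; rewrite ep12 in t1; slra.
Qed.

Lemma cmp {y y' rho rho' n n'} : good y rho n -> good y' rho' n' -> 0 < rho ->
  rho <= rho' -> rho' <= 2 * rho -> edist y y' < 3/5 * rho -> cr n n' ^+ 2 <= 1/100.
Proof.
move=> g1 g2 h0 hr1 hr2 hyy.
have l0 : (0:R) < 1/3 by slra.
have l1 : (1/3:R) < 1 by slra.
have [q1 [q2 [Kq1 Kq2 d1 d2 d12]]] := pts _ _ _ _ g1 h0 l0 l1.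
case: g1 => hn hf1 _; case: g2 => hn' hf2 _.
have a1 : `|sdot y n q1| <= rho / 100 by apply/ltW/hf1 => //; slra.
have a2 : `|sdot y n q2| <= rho / 100 by apply/ltW/hf1 => //; slra.
have t1 := edist_tri q1 y y'; have t2 := edist_tri q2 y y'.
have b1 : `|sdot y' n' q1| <= rho / 50.
  apply: le_trans (ltW (hf2 _ Kq1 _)) _; slra.
have b2 : `|sdot y' n' q2| <= rho / 50.
  apply: le_trans (ltW (hf2 _ Kq2 _)) _; slra.
have L0 : 0 <= (2 * (1/3) - 1/50) * rho by apply: mulr_ge0; slra.
have := cmp_gen _ _ _ _ _ _ _ _ _ hn hn' a1 a2 b1 b2 L0 (ltW d12).
have -> : 2 * (rho / 100) + 2 * (rho / 50) = 6/100 * rho by field.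
move/scale_out => /(_ h0) h.
have := sqr_ge0 (cr n n'); slra.
Qed.

Definition pick y rho : R * R := xget (1, 0) [set v | good y rho v].

Lemma pick_good y rho : (exists v, good y rho v) -> good y rho (pick y rho).
Proof.
move=> [v gv]; rewrite /pick; case: xgetP => [w -> Pw //| nP].
by exfalso; exact: (nP v gv).
Qed.

Definition negv v : R * R := (- v.1, - v.2).
Definition orient a v : R * R := if 0 <= dot a v then v else negv v.

Lemma good_neg y rho v : good y rho v -> good y rho (negv v).
Proof.
have e : forall q, sdot y (negv v) q = - sdot y v q by move=> q; rewrite /sdot /negv /=; ring.
case=> hv h1 h2; split.
- by move: hv; rewrite /unitv /negv /= !sqrrN.
- by move=> q Kq hq; rewrite e normrN; exact: h1.
- by move=> p; rewrite e => /eqP; rewrite oppr_eq0 => /eqP hp; exact: h2.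
Qed.

Lemma orient_good a y rho v : good y rho v -> good y rho (orient a v).
Proof. by rewrite /orient; case: ifP => _ //; exact: good_neg. Qed.

Lemma orient_pos a v : 0 <= dot a (orient a v).
Proof.
rewrite /orient; case: ifP => // /negbT; rewrite -ltNge => h.
have -> : dot a (negv v) = - dot a v by rewrite /dot /negv /=; ring.
by rewrite oppr_ge0 ltW.
Qed.

Definition sc (k : nat) : R := 5 * r / 2 ^+ k.

Lemma sc_gt0 k : 0 < sc k.
Proof. by rewrite /sc divr_gt0 ?exprn_gt0 //; slra. Qed.

Lemma scS k : sc k.+1 = sc k / 2.
Proof. rewrite /sc exprS invfM; field. by rewrite expf_neq0. Qed.

Lemma sc0 : sc 0 = 5 * r.
Proof. by rewrite /sc expr0 divr1. Qed.

Lemma sc_le5 k : sc k <= 5 * r.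
Proof.
elim: k => [|k IH]; first by rewrite sc0.
rewrite scS; have := sc_gt0 k; slra.
Qed.

Hypothesis hK : rel_closed K (eball x0 (10 * r)).

Section Nu.
Variable nu : R * R.
Hypothesis hnu : optimal_normal K x0 r nu.

Lemma nu_unit : unitv nu. Proof. by case: hnu. Qed.

Lemma nu_flat q : K q -> edist q x0 < r -> `|sdot x0 nu q| <= Ifl.
Proof.
move=> Kq hq; rewrite /Ifl; case: hnu => hu <-.
exact: fw_ub Kx0 hr hu Kq hq.
Qed.

Lemma nu_flat' q : K q -> edist q x0 < r -> `|sdot x0 nu q| < r / 100.
Proof. move=> Kq hq; exact: le_lt_trans (nu_flat _ Kq hq) Ifl_lt. Qed.

Lemma cmp0 {y rho n} : good y rho n -> 0 < rho -> rho <= 5 * r ->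
  edist y x0 + 91/100 * r < rho -> cr n nu ^+ 2 <= 1/100.
Proof.
move=> gy h0 h5 hyx.
have e1 : edist x0 x0 < 5 * r by rewrite edist_xx; slra.
have e2 : r <= 5 * r by slra.
have [w gw] := exists_good Kx0 e1 hr e2.
have l0 : (0:R) < 9/10 by slra.
have l1 : (9/10:R) < 1 by slra.
have [q1 [q2 [Kq1 Kq2 d1 d2 d12]]] := pts _ _ _ _ gw hr l0 l1.
case: gy => hn hf _.
have a1 : `|sdot y n q1| <= r / 20.
  apply: le_trans (ltW (hf _ Kq1 _)) _; last by slra.
  have := edist_tri q1 x0 y; rewrite (edist_sym x0 y); slra.
have a2 : `|sdot y n q2| <= r / 20.
  apply: le_trans (ltW (hf _ Kq2 _)) _; last by slra.
  have := edist_tri q2 x0 y; rewrite (edist_sym x0 y); slra.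
have b1 : `|sdot x0 nu q1| <= r / 100 by apply/ltW/nu_flat' => //; slra.
have b2 : `|sdot x0 nu q2| <= r / 100 by apply/ltW/nu_flat' => //; slra.
have L0 : 0 <= (2 * (9/10) - 1/50) * r by apply: mulr_ge0; slra.
have := cmp_gen _ _ _ _ _ _ _ _ _ hn nu_unit a1 a2 b1 b2 L0 (ltW d12).
have -> : 2 * (r / 20) + 2 * (r / 100) = 12/100 * r by field.
move/scale_out => /(_ hr) h.
have := sqr_ge0 (cr n nu); slra.
Qed.

Fixpoint nrm (k : nat) y : R * R :=
  match k with
  | 0 => orient nu (pick y (sc 0))
  | k'.+1 => orient (nrm k' y) (pick y (sc k'.+1))
  end.

Definition Dom y := K y /\ edist y x0 < 3 * r.

Lemma nrm_good k {y} : Dom y -> good y (sc k) (nrm k y).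
Proof.
move=> [Ky hy].
have hg : forall k', good y (sc k') (pick y (sc k')).
  move=> k'; apply: pick_good; apply: exists_good => //.
  - by slra.
  - exact: sc_gt0.
  - exact: sc_le5.
by case: k => [|k] /=; apply: orient_good.
Qed.

Lemma nrm_unit k {y} : Dom y -> unitv (nrm k y).
Proof. by move=> hy; case: (nrm_good k hy). Qed.

Lemma nrm0_pos y : 0 <= dot nu (nrm 0 y).
Proof. exact: orient_pos. Qed.

Lemma nrmS_pos k y : 0 <= dot (nrm k y) (nrm k.+1 y).
Proof. exact: orient_pos. Qed.

Lemma nrm0_nu {y} : Dom y -> cr (nrm 0 y) nu ^+ 2 <= 1/100.
Proof.
move=> hy; apply: (cmp0 (nrm_good 0 hy)); rewrite ?sc0; try slra.
case: hy => _ h; slra.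
Qed.

Lemma Pk k : forall y y', Dom y -> Dom y' -> edist y y' < 3/5 * sc k ->
  0 < dot (nrm k y) (nrm k y').
Proof.
elim: k => [|k IH] y y' hy hy' hd.
  have c1 := nrm0_nu hy; have c2 := nrm0_nu hy'.
  have p1 : 0 < dot (nrm 0 y) nu.
    apply: dot_pos (nrm_unit 0 hy) nu_unit _ _; first by rewrite dot_sym nrm0_pos.
    slra.
  have p2 : 0 < dot nu (nrm 0 y').
    apply: dot_pos nu_unit (nrm_unit 0 hy') _ _; first exact: nrm0_pos.
    rewrite cr_sq_sym; slra.
  apply: (sgn_comb (nrm_unit 0 hy) nu_unit (nrm_unit 0 hy')) => //; first by slra.
  rewrite cr_sq_sym; slra.
have hsc := sc_gt0 k.+1; have hs := scS k.
set a := nrm k.+1 y; set b := nrm k y; set c := nrm k y'; set d := nrm k.+1 y'.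
have ua : unitv a := nrm_unit _ hy; have ub : unitv b := nrm_unit _ hy.
have uc : unitv c := nrm_unit _ hy'; have ud : unitv d := nrm_unit _ hy'.
have ga : good y (sc k.+1) a := nrm_good _ hy; have gb : good y (sc k) b := nrm_good _ hy.
have gc : good y' (sc k) c := nrm_good _ hy'; have gd : good y' (sc k.+1) d := nrm_good _ hy'.
have e0 : forall u, edist u u < 3/5 * sc k.+1 by move=> u; rewrite edist_xx; slra.
have cab : cr a b ^+ 2 <= 1/100.
  apply: cmp ga gb _ _ _ (e0 y) => //; slra.
have pab : 0 < dot a b.
  apply: dot_pos ua ub _ _; first by rewrite dot_sym; exact: nrmS_pos.
  slra.
have pbc : 0 < dot b c by apply: IH => //; slra.
have cbc : cr b c ^+ 2 <= 1/100.
  apply: cmp gb gc _ _ _ _ => //; slra.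
have pac : 0 < dot a c.
  apply: sgn_comb ua ub uc _ _ pab pbc; slra.
have cac : cr a c ^+ 2 <= 1/100.
  apply: cmp ga gc _ _ _ hd => //; slra.
have cdc : cr d c ^+ 2 <= 1/100.
  apply: cmp gd gc _ _ _ (e0 y') => //; slra.
have pcd : 0 < dot c d.
  apply: dot_pos uc ud _ _; first exact: nrmS_pos.
  rewrite cr_sq_sym; slra.
apply: sgn_comb ua uc ud _ _ pac pcd; first by slra.
rewrite cr_sq_sym; slra.
Qed.

Definition dd z := setdist z K.

Definition Adm z y k :=
  [/\ Dom y, edist z y < 11/10 * dd z, 4 * dd z <= sc k & sc k <= 10 * dd z].

Lemma dd_ge0 z : 0 <= dd z. Proof. exact: sd_ge0. Qed.

Lemma adm_dpos {z y k} : Adm z y k -> 0 < dd z.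
Proof. case=> _ h _ _; have := edist_ge0 z y; have := dd_ge0 z; slra. Qed.

Lemma foot_props y n z : unitv n ->
  [/\ sdot y n (z.1 - sdot y n z * n.1, z.2 - sdot y n z * n.2) = 0,
     edist (z.1 - sdot y n z * n.1, z.2 - sdot y n z * n.2) y <= edist z y &
     edist z (z.1 - sdot y n z * n.1, z.2 - sdot y n z * n.2) <= `|sdot y n z|].
Proof.
move=> hn; move: (hn); rewrite /unitv => hn'.
split.
- transitivity (sdot y n z * (1 - (n.1 ^+ 2 + n.2 ^+ 2))); first by rewrite /sdot /=; ring.
  by rewrite hn' subrr mulr0.
- apply: edist_le; first exact: edist_ge0.
  rewrite edist_sq /=.
  have -> : (z.1 - sdot y n z * n.1 - y.1) ^+ 2 + (z.2 - sdot y n z * n.2 - y.2) ^+ 2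
     = (z.1 - y.1) ^+ 2 + (z.2 - y.2) ^+ 2 - sdot y n z ^+ 2 * (2 - (n.1 ^+ 2 + n.2 ^+ 2)) by rewrite /sdot; ring.
  rewrite hn'; have := sqr_ge0 (sdot y n z); lra.
- apply: edist_le; first exact: normr_ge0.
  rewrite /= real_normK ?num_real //.
  have -> : (z.1 - (z.1 - sdot y n z * n.1)) ^+ 2 + (z.2 - (z.2 - sdot y n z * n.2)) ^+ 2 = sdot y n z ^+ 2 * (n.1 ^+ 2 + n.2 ^+ 2) by ring.
  by rewrite hn' mulr1.
Qed.

Lemma sign_lb {z y k} : Adm z y k -> 9/10 * dd z <= `|sdot y (nrm k y) z|.
Proof.
move=> ha; have d0 := adm_dpos ha; case: ha => hy hzy h4 h10.
case: (nrm_good k hy) => hn _ hl.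
have [e1 e2 e3] := foot_props y _ z hn.
set s := sdot y (nrm k y) z in e1 e2 e3 *.
set p := (z.1 - s * (nrm k y).1, z.2 - s * (nrm k y).2) in e1 e2 e3 *.
have hpy : edist p y < sc k by slra.
have [q Kq hq] := hl p e1 hpy.
have := edist_tri z p q; have := sd_lb z Kq; rewrite -/(dd z) => h1 h2.
slra.
Qed.

Lemma dist_yy {z y k y' k'} : Adm z y k -> Adm z y' k' -> edist y y' < 22/10 * dd z.
Proof.
case=> _ h1 _ _ [_ h2 _ _]; have := edist_tri y z y'; rewrite (edist_sym y z); slra.
Qed.

Lemma signcmp {z y k y' k'} : Adm z y k -> Adm z y' k' ->
  99/100 <= dot (nrm k y) (nrm k' y') ->
  (0 < sdot y (nrm k y) z) = (0 < sdot y' (nrm k' y') z).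
Proof.
move=> ha ha' hd.
have d0 := adm_dpos ha; have l1 := sign_lb ha; have l2 := sign_lb ha'.
have dyy := dist_yy ha ha'.
case: ha => hy hzy h4 h10; case: ha' => hy' hzy' h4' h10'.
have gn := nrm_good k hy; have gn' := nrm_good k' hy'.
case: gn => hn hf _; case: gn' => hn' _ _.
set n := nrm k y in hd l1 hn hf *; set n' := nrm k' y' in hd l2 hn' *.
have hW : `|sdot y n y'| < dd z / 10.
  apply: lt_le_trans (hf _ hy'.1 _) _; last by slra.
  rewrite edist_sym; slra.
set T := (z.1 - y'.1) * (n'.1 - n.1) + (z.2 - y'.2) * (n'.2 - n.2).
have eT : sdot y' n' z - sdot y n z = T - sdot y n y' by rewrite /T /sdot; ring.
have hnn : (n'.1 - n.1) ^+ 2 + (n'.2 - n.2) ^+ 2 <= 2/100.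
  have -> : (n'.1 - n.1) ^+ 2 + (n'.2 - n.2) ^+ 2 =
     (n.1 ^+ 2 + n.2 ^+ 2) + (n'.1 ^+ 2 + n'.2 ^+ 2) - 2 * dot n n' by rewrite /dot; ring.
  move: hn hn'; rewrite /unitv => -> ->; lra.
have hzz := edist_sq_lt _ _ _ hzy'.
have hT : `|T| <= 16/100 * dd z.
  apply: abs_le_of_sq; first by slra.
  apply: le_trans (cs_vec _ _ _ _) _.
  have a0 : 0 <= (z.1 - y'.1) ^+ 2 + (z.2 - y'.2) ^+ 2 by rewrite addr_ge0 // sqr_ge0.
  have b0 : 0 <= (n'.1 - n.1) ^+ 2 + (n'.2 - n.2) ^+ 2 by rewrite addr_ge0 // sqr_ge0.
  apply: le_trans (_ : (11/10 * dd z) ^+ 2 * (2/100) <= _).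
    by apply: ler_pM => //; exact: ltW.
  rewrite !exprMn; have := sqr_ge0 (dd z); slra.
move: hW hT l1 l2 eT; set s := sdot y n z; set s' := sdot y' n' z; set W := sdot y n y'.
move=> hW hT l1 l2 eT.
have := ler_norm W; have := ler_norm (- W); rewrite normrN.
have := ler_norm T; have := ler_norm (- T); rewrite normrN.
move=> t1 t2 w1 w2.
apply/idP/idP => hs.
- rewrite gtr0_norm // in l1; slra.
- rewrite gtr0_norm // in l2; slra.
Qed.

Lemma sc_anti m j : sc (m + j) <= sc m.
Proof.
elim: j => [|j IH]; first by rewrite addn0.
rewrite addnS scS; have := sc_gt0 (m + j); slra.
Qed.

Lemma k_range {z y k y' k'} : Adm z y k -> Adm z y' k' -> (k' <= k.+1)%N.
Proof.
move=> ha ha'; have d0 := adm_dpos ha.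
case: ha => _ _ _ h10; case: ha' => _ _ h4 _.
rewrite leqNgt; apply/negP => hlt.
have : sc k' <= sc k.+2.
  have -> : k' = (k.+2 + (k' - k.+2))%N by rewrite subnKC.
  exact: sc_anti.
rewrite !scS => h; slra.
Qed.

Lemma dot_same {z y y' k} : Adm z y k -> Adm z y' k -> 99/100 <= dot (nrm k y) (nrm k y').
Proof.
move=> ha ha'; have dyy := dist_yy ha ha'.
have d0 := adm_dpos ha.
case: (ha) => hy _ h4 _; case: (ha') => hy' _ _ _.
apply: dot_close (nrm_unit _ hy) (nrm_unit _ hy') _ _.
  apply: Pk => //; slra.
apply: (cmp (nrm_good _ hy) (nrm_good _ hy')); try slra.
Qed.

Lemma dot_succ {z y y' k} : Adm z y k -> Adm z y' k.+1 ->
  99/100 <= dot (nrm k y) (nrm k.+1 y').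
Proof.
move=> ha ha'; have dyy := dist_yy ha ha'.
have d0 := adm_dpos ha.
case: (ha) => hy _ h4 _; case: (ha') => hy' _ h4' _.
have hs := scS k; have hsc := sc_gt0 k.+1.
set n := nrm k y; set b := nrm k y'; set n' := nrm k.+1 y'.
have un : unitv n := nrm_unit _ hy; have ub : unitv b := nrm_unit _ hy'.
have un' : unitv n' := nrm_unit _ hy'.
have gn : good y (sc k) n := nrm_good _ hy; have gb : good y' (sc k) b := nrm_good _ hy'.
have gn' : good y' (sc k.+1) n' := nrm_good _ hy'.
have e0 : edist y' y' < 3/5 * sc k.+1 by rewrite edist_xx; slra.
have cnb' : cr n' b ^+ 2 <= 1/100 by apply: (cmp gn' gb) => //; slra.
have pbn' : 0 < dot b n'.
  apply: dot_pos ub un' _ _; first exact: nrmS_pos.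
  rewrite cr_sq_sym; slra.
have pnb : 0 < dot n b by apply: Pk => //; slra.
have cnb : cr n b ^+ 2 <= 1/100 by apply: (cmp gn gb); slra.
have pnn' : 0 < dot n n' by apply: sgn_comb un ub un' _ _ pnb pbn'; [slra | rewrite cr_sq_sym; slra].
have cnn' : cr n' n ^+ 2 <= 1/100.
  apply: (cmp gn' gn) => //; try slra.
  rewrite edist_sym; slra.
apply: dot_close un un' pnn' _; rewrite cr_sq_sym; slra.
Qed.

Lemma uniq_sign {z y k y' k'} : Adm z y k -> Adm z y' k' ->
  (0 < sdot y (nrm k y) z) = (0 < sdot y' (nrm k' y') z).
Proof.
move=> ha ha'.
have r1 := k_range ha ha'; have r2 := k_range ha' ha.
case: (ltngtP k k') => hkk.
- have ek : k' = k.+1 by apply/eqP; rewrite eqn_leq r1 hkk.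
  subst k'; apply: (signcmp ha ha'); exact: dot_succ ha ha'.
- have ek : k = k'.+1 by apply/eqP; rewrite eqn_leq r2 hkk.
  subst k; apply: (signcmp ha ha').
  by rewrite dot_sym; exact: dot_succ ha' ha.
- subst k'; apply: (signcmp ha ha'); exact: dot_same ha ha'.
Qed.

Definition g z : bool := `[< exists y k, Adm z y k /\ 0 < sdot y (nrm k y) z >].

Lemma gE {z y k} : Adm z y k -> g z = (0 < sdot y (nrm k y) z).
Proof.
move=> ha; apply/idP/idP => [/asboolP [y' [k' [ha' hs]]] | hs].
  by rewrite (uniq_sign ha ha').
by apply/asboolP; exists y, k.
Qed.

Lemma find_k (c : R) : 0 < c -> c <= sc 0 -> exists k, c <= sc k /\ sc k.+1 < c.
Proof.
move=> c0 cs; apply: contrapT => H.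
have all : forall k, c <= sc k.
  elim => // k IH; apply: contrapT => nP; apply: H; exists k; split => //.
  by rewrite ltNge; apply/negP.
set N := Num.Def.archi_bound (5 * r / c).
have hN : 5 * r / c < N%:R by apply: archi_boundP; apply: divr_ge0; slra.
have h2 : (N%:R : R) <= 2 ^+ N.
  rewrite -natrX ler_nat; exact/ltnW/ltn_expl.
have := all N; rewrite /sc => h.
have p2 : 0 < (2:R) ^+ N by rewrite exprn_gt0.
rewrite ler_pdivlMr // in h.
rewrite ltr_pdivrMr // in hN.
have : c * N%:R <= c * 2 ^+ N by rewrite ler_pM2l.
move=> h3; rewrite mulrC in h; slra.
Qed.

Lemma ex_adm z : edist z x0 < r -> 0 < dd z ->
  exists y, exists k, [/\ Adm z y k, 22/5 * dd z <= sc k & sc k <= 44/5 * dd z].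
Proof.
move=> hz d0.
have dr : dd z < r := le_lt_trans (sd_lb z Kx0) hz.
have e0 : 0 < dd z / 10 by slra.
have [y Ky hy] := sd_adh z _ e0.
have c0 : 0 < 22/5 * dd z by slra.
have cs : 22/5 * dd z <= sc 0 by rewrite sc0; slra.
have [k [hk1 hk2]] := find_k _ c0 cs.
exists y, k; split => //; last by rewrite scS in hk2; slra.
split; rewrite -/(dd z); try slra.
  split => //; have := edist_tri y z x0; rewrite (edist_sym y z); slra.
rewrite scS in hk2; slra.
Qed.

Lemma dd_pos z : edist z x0 < r -> ~ K z -> 0 < dd z.
Proof.
move=> hz nKz; case: hK => Ksub [C [cC KC]].
have nCz : ~ C z.
  move=> Cz; apply: nKz; rewrite KC; split => //; rewrite /eball /=; slra.
have : nbhs z (~` C).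
  have oC := closed_openC cC; move: oC; rewrite openE => oC; exact: (oC z nCz).
move/nbhs_ballP => [e /= e0 he].
apply: lt_le_trans e0 _; apply: lb_le_inf; first by exists (edist z x0), x0.
move=> _ [q Kq <-]; rewrite leNgt; apply/negP => hq.
have Cq : C q by move: Kq; rewrite KC => -[].
apply: (he q) => //.
have h1 : `|z.1 - q.1| <= edist z q.
  by apply: abs_le_of_sq; [exact: edist_ge0 | rewrite edist_sq; rewrite lerDl sqr_ge0].
have h2 : `|z.2 - q.2| <= edist z q.
  by apply: abs_le_of_sq; [exact: edist_ge0 | rewrite edist_sq; rewrite lerDr sqr_ge0].
by split; rewrite /ball /=; [apply: le_lt_trans h1 hq | apply: le_lt_trans h2 hq].
Qed.

Lemma loc z : edist z x0 < r -> 0 < dd z -> nbhs z [set w | g w = g z].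
Proof.
move=> hz d0.
have [y [k [ha hk1 hk2]]] := ex_adm _ hz d0.
have l1 := sign_lb ha.
case: (ha) => hy hzy h4 h10.
set d := dd z in d0 l1 hzy h4 h10 hk1 hk2 *.
set m := 11/10 * d - edist z y.
have m0 : 0 < m by rewrite /m subr_gt0.
set e := Num.min (d / 20) (m / 4).
have e0 : 0 < e by rewrite lt_min; apply/andP; split; slra.
apply: (filterS _ (nbhs_edist z _ e0)) => w /= hw.
have hw1 : edist z w < d / 20 by move: hw; rewrite lt_min => /andP[].
have hw2 : edist z w < m / 4 by move: hw; rewrite lt_min => /andP[].
have L1 := sd_lip w z; have L2 := sd_lip z w.
rewrite -/(dd w) -/(dd z) -/d in L1 L2; rewrite (edist_sym w z) in L1.
have haw : Adm w y k.
  split => //; try slra.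
  have := edist_tri w z y; rewrite (edist_sym w z); rewrite /m in m0 hw2; slra.
rewrite (gE haw) (gE ha).
have un := nrm_unit k hy.
have -> : sdot y (nrm k y) w = sdot y (nrm k y) z + sdot z (nrm k y) w by rewrite /sdot; ring.
have hs := sdot_cs z _ w un; rewrite edist_sym in hs.
have := ler_norm (sdot z (nrm k y) w); have := ler_norm (- sdot z (nrm k y) w); rewrite normrN.
move: l1 hs; set s := sdot y (nrm k y) z; set t := sdot z (nrm k y) w => l1 hs t1 t2.
apply/idP/idP => hs'.
- case: (ltrP 0 s) => h; first by [].
  rewrite ler0_norm // in l1; slra.
- rewrite gtr0_norm // in l1; slra.
Qed.

Definition zs (sg : R) : R * R := (x0.1 + sg * (r / 2) * nu.1, x0.2 + sg * (r / 2) * nu.2).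

Lemma sg_cases {sg : R} : sg = 1 \/ sg = -1 -> sg ^+ 2 = 1.
Proof. by case=> ->; rewrite ?expr1n ?sqrrN ?expr1n. Qed.

Lemma sdot_zs sg : sdot x0 nu (zs sg) = sg * (r / 2).
Proof.
have hn := nu_unit; move: hn; rewrite /unitv => hn.
transitivity (sg * (r / 2) * (nu.1 ^+ 2 + nu.2 ^+ 2)); first by rewrite /sdot /zs /=; ring.
by rewrite hn mulr1.
Qed.

Lemma edist_zs {sg} : sg = 1 \/ sg = -1 -> edist (zs sg) x0 = r / 2.
Proof.
move=> hs; have h2 := sg_cases hs.
have hn := nu_unit; move: hn; rewrite /unitv => hn.
rewrite /edist /zs /=.
have -> : (x0.1 + sg * (r / 2) * nu.1 - x0.1) ^+ 2 + (x0.2 + sg * (r / 2) * nu.2 - x0.2) ^+ 2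
  = sg ^+ 2 * (r / 2) ^+ 2 * (nu.1 ^+ 2 + nu.2 ^+ 2) by ring.
rewrite hn h2 !mul1r mulr1 sqrtr_sqr ger0_norm //; slra.
Qed.

Lemma dd_zs {sg} : sg = 1 \/ sg = -1 -> 49/100 * r <= dd (zs sg) /\ dd (zs sg) <= r / 2.
Proof.
move=> hs; have ez := edist_zs hs; split; last first.
  by rewrite -ez; exact: (sd_lb _ Kx0).
apply: lb_le_inf; first by exists (edist (zs sg) x0), x0.
move=> _ [q Kq <-].
case: (ltrP (edist q x0) r) => hq.
  have h1 := nu_flat' _ Kq hq.
  have h2 := sdot_cs q nu (zs sg) nu_unit.
  have e : sdot q nu (zs sg) = sdot x0 nu (zs sg) - sdot x0 nu q by rewrite /sdot; ring.
  rewrite e sdot_zs in h2.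
  have h3 : `|sg * (r / 2)| = r / 2 by case: hs => ->; rewrite ?mul1r ?mulN1r ?normrN gtr0_norm //; slra.
  have := ler_normD (sg * (r / 2) - sdot x0 nu q) (sdot x0 nu q); rewrite subrK h3.
  move: h1 h2; set a := sdot x0 nu q => h1 h2 h4.
  slra.
have := edist_tri q (zs sg) x0; rewrite ez (edist_sym q (zs sg)); slra.
Qed.

Lemma g_zs {sg} : sg = 1 \/ sg = -1 -> g (zs sg) = (0 < sg).
Proof.
move=> hs; have [d1 d2] := dd_zs hs; have ez := edist_zs hs.
set d := dd (zs sg) in d1 d2.
have e0 : 0 < d / 10 by slra.
have [y Ky hy] := sd_adh (zs sg) _ e0.
rewrite -/(dd _) -/d in hy.
have hyx : edist y x0 < 21/20 * r.
  have := edist_tri y (zs sg) x0; rewrite ez (edist_sym y (zs sg)); slra.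
have Dy : Dom y by split => //; slra.
have s1 : sc 1 = 5 / 2 * r by rewrite scS sc0; slra.
have ha : Adm (zs sg) y 1 by split => //; rewrite -/d; slra.
rewrite (gE ha).
set n0 := nrm 0 y; set n1 := nrm 1 y.
have u0 : unitv n0 := nrm_unit _ Dy; have u1 : unitv n1 := nrm_unit _ Dy.
have c0 : cr n0 nu ^+ 2 <= 1/100 := nrm0_nu Dy.
have p0 : 0 < dot nu n0.
  apply: dot_pos nu_unit u0 _ _; first exact: nrm0_pos.
  rewrite cr_sq_sym; slra.
have c01 : cr n1 n0 ^+ 2 <= 1/100.
  apply: (cmp (nrm_good 1 Dy) (nrm_good 0 Dy)); rewrite ?edist_xx ?sc0 ?s1; slra.
have p01 : 0 < dot n0 n1.
  apply: dot_pos u0 u1 _ _; first exact: nrmS_pos.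
  rewrite cr_sq_sym; slra.
have p1 : 0 < dot nu n1.
  apply: sgn_comb nu_unit u0 u1 _ _ p0 p01; first by rewrite cr_sq_sym; slra.
  rewrite cr_sq_sym; slra.
have c1 : cr n1 nu ^+ 2 <= 1/100.
  apply: (cmp0 (nrm_good 1 Dy)); rewrite ?s1; slra.
have q1 : 99/100 <= dot nu n1 by apply: dot_close nu_unit u1 p1 _; rewrite cr_sq_sym.
have hx : `|sdot y n1 x0| < sc 1 / 100.
  case: (nrm_good 1 Dy) => _ hf _; apply: hf => //; rewrite edist_sym s1; slra.
have -> : sdot y n1 (zs sg) = sdot y n1 x0 + sg * (r / 2) * dot nu n1 by rewrite /sdot /zs /dot /=; ring.
rewrite s1 in hx; move: hx q1; set a := sdot y n1 x0; set b := dot nu n1 => hx q1.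
have := ler_norm a; have := ler_norm (- a); rewrite normrN => t1 t2.
case: hs => ->.
  rewrite ltr01 mul1r; apply/idP; snra.
rewrite ltr0N1; apply/negbTE; rewrite -leNgt; snra.
Qed.

Definition Dset (sg : R) := [set z | edist z x0 < r /\ Ifl < sg * sdot x0 nu z].

Lemma Dset_U {sg z} : sg = 1 \/ sg = -1 -> Dset sg z -> edist z x0 < r /\ ~ K z.
Proof.
move=> hs [h1 h2]; split => // Kz.
have := nu_flat _ Kz h1; have := ler_norm (sdot x0 nu z); have := ler_norm (- sdot x0 nu z).
rewrite normrN; case: hs h2 => -> h2; rewrite ?mul1r ?mulN1r in h2; slra.
Qed.

Lemma zs_Dset {sg} : sg = 1 \/ sg = -1 -> Dset sg (zs sg).
Proof.
move=> hs; split; first by rewrite edist_zs //; slra.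
rewrite sdot_zs mulrA -expr2 sg_cases // mul1r; have := Ifl_lt; slra.
Qed.

Lemma convex_lt (A B c t : R) : A < c -> B < c -> 0 <= t <= 1 -> (1 - t) * A + t * B < c.
Proof.
move=> hA hB /andP[t0 t1]; case: (ltrP t 1) => h.
  have h1 : (1 - t) * A < (1 - t) * c by rewrite ltr_pM2l // subr_gt0.
  have h2 : t * B <= t * c by rewrite ler_wpM2l // ltW.
  lra.
have -> : t = 1 by apply/le_anti; rewrite t1 h.
by rewrite subrr mul0r add0r mul1r.
Qed.

Lemma Dset_conv {sg a b t} : Dset sg a -> Dset sg b -> 0 <= t <= 1 -> Dset sg (segp a b t).
Proof.
move=> [a1 a2] [b1 b2] ht; have := ht; move=> /andP[t0 t1].
split.
  apply: le_lt_trans (segp_dist _ _ _ _ ht) _; exact: convex_lt.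
rewrite segp_sdot.
have -> : sg * ((1 - t) * sdot x0 nu a + t * sdot x0 nu b) =
  (1 - t) * (sg * sdot x0 nu a) + t * (sg * sdot x0 nu b) by ring.
have h1 : (1 - t) * Ifl + t * Ifl = Ifl by ring.
rewrite -[X in X < _]h1 -subr_gt0.
have -> : (1 - t) * (sg * sdot x0 nu a) + t * (sg * sdot x0 nu b) - ((1 - t) * Ifl + t * Ifl)
  = (1 - t) * (sg * sdot x0 nu a - Ifl) + t * (sg * sdot x0 nu b - Ifl) by ring.
rewrite -[X in X < _](addr0 0) .
have := @convex_lt (- (sg * sdot x0 nu a - Ifl)) (- (sg * sdot x0 nu b - Ifl)) 0 t.
rewrite !oppr_lt0 !subr_gt0 => /(_ a2 b2 ht).
rewrite addr0 => h; lra.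
Qed.

Definition Uset := [set w | edist w x0 < r /\ 0 < dd w].

Lemma Uset_loc : forall t, Uset t -> nbhs t [set w | g w = g t].
Proof. by move=> t [h1 h2]; exact: loc. Qed.

Lemma seg_in {sg a} : sg = 1 \/ sg = -1 -> Dset sg a ->
  [set segp (zs sg) a t | t in `[0, 1]] `<=` Dset sg.
Proof.
move=> hs ha _ [t ht <-]; apply: Dset_conv => //; try exact: zs_Dset.
all: try by move: ht; rewrite /= in_itv.
Qed.

Lemma seg_ends sg a : [set segp (zs sg) a t | t in `[0, 1]] (zs sg) /\
   [set segp (zs sg) a t | t in `[0, 1]] a.
Proof.
split.
  by exists 0; [rewrite /= in_itv /= lexx ler01 | exact: segp0].
by exists 1; [rewrite /= in_itv /= lexx ler01 | exact: segp1].
Qed.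

Lemma g_Dset {sg z} : sg = 1 \/ sg = -1 -> Dset sg z -> g z = (0 < sg).
Proof.
move=> hs hz; rewrite -(g_zs hs).
have [e1 e2] := seg_ends sg z.
symmetry; apply: (@loc_const_connected _ g Uset _ Uset_loc (seg_connected _ _) _ _ _ e1 e2).
move=> w /(seg_in hs hz) hw; have [h1 h2] := Dset_U hs hw.
by split => //; exact: dd_pos.
Qed.

Lemma Dplus_eq : Dplus x0 r nu Ifl = Dset 1.
Proof.
rewrite /Dplus /Dset; apply/seteqP; split => z /= [h1 h2]; split => //.
  by rewrite mul1r.
by rewrite mul1r in h2.
Qed.

Lemma Dminus_eq : Dminus x0 r nu Ifl = Dset (-1).
Proof.
rewrite /Dminus /Dset; apply/seteqP; split => z /= [h1 h2]; split => //.
  by rewrite mulN1r.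
by rewrite mulN1r in h2.
Qed.

Lemma dc : distinct_components (eball x0 r `\` K) (Dplus x0 r nu Ifl) (Dminus x0 r nu Ifl).
Proof.
rewrite Dplus_eq Dminus_eq.
have h1 : (1:R) = 1 \/ (1:R) = -1 by left.
have h2 : (-1:R) = 1 \/ (-1:R) = -1 by right.
have subU : forall sg, sg = 1 \/ sg = -1 -> forall a, Dset sg a ->
    [set segp (zs sg) a t | t in `[0, 1]] `<=` eball x0 r `\` K.
  move=> sg hs a ha w /(seg_in hs ha) hw; have [w1 w2] := Dset_U hs hw; by split.
have covers : forall sg, sg = 1 \/ sg = -1 ->
    Dset sg `<=` connected_component (eball x0 r `\` K) (zs sg).
  move=> sg hs a ha; have [e1 e2] := seg_ends sg a.
  exact: (connected_component_max e1 (subU sg hs a ha) (seg_connected _ _)) e2.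
split.
- by exists (zs 1); apply: covers.
- by exists (zs (-1)); apply: covers.
- move=> a b ha hb hab.
  have [a1 a2] := Dset_U h1 ha.
  have Ua : (eball x0 r `\` K) a by split.
  have hloc : forall t, (eball x0 r `\` K) t -> nbhs t [set w | g w = g t].
    by move=> t [t1 t2]; apply: loc => //; exact: dd_pos.
  have := @loc_const_connected _ g (eball x0 r `\` K) _ hloc (@component_connected _ _ a)
     (@connected_component_sub _ _ _) a b (connected_component_refl Ua) hab.
  by rewrite (g_Dset h1 ha) (g_Dset h2 hb) ltr01 ltr0N1.
Qed.

End Nu.

Lemma beta_r : beta K x0 r * r = Ifl.
Proof. by rewrite /beta mulrAC mulVf ?mul1r // gt_eqF. Qed.

Lemma fw_lip {v w} : unitv v -> unitv w ->
  flat_width K x0 r v <= flat_width K x0 r w + r * (`|v.1 - w.1| + `|v.2 - w.2|).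
Proof.
move=> hv hw; apply: fw_le Kx0 hr _ => y Ky hy.
have h1 : `|y.1 - x0.1| <= r.
  apply: ltW; apply: le_lt_trans _ hy; apply: abs_le_of_sq; first exact: edist_ge0.
  by rewrite edist_sq lerDl sqr_ge0.
have h2 : `|y.2 - x0.2| <= r.
  apply: ltW; apply: le_lt_trans _ hy; apply: abs_le_of_sq; first exact: edist_ge0.
  by rewrite edist_sq lerDr sqr_ge0.
have e : sdot x0 v y = sdot x0 w y + ((y.1 - x0.1) * (v.1 - w.1) + (y.2 - x0.2) * (v.2 - w.2)).
  by rewrite /sdot; ring.
rewrite /ldist e.
apply: le_trans (ler_normD _ _) _.
have f1 := fw_ub Kx0 hr hw Ky hy; rewrite /ldist in f1.
have g1 : `|(y.1 - x0.1) * (v.1 - w.1) + (y.2 - x0.2) * (v.2 - w.2)| <=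
    r * (`|v.1 - w.1| + `|v.2 - w.2|).
  apply: le_trans (ler_normD _ _) _; rewrite !normrM mulrDr.
  by apply: lerD; apply: ler_wpM2r.
apply: lerD => //.
Qed.

Lemma opt_exists : exists v, optimal_normal K x0 r v.
Proof.
pose f (th : R) := flat_width K x0 r (cos th, sin th).
have uc : forall th : R, unitv (cos th, sin th) by move=> th; rewrite /unitv /= cos2Dsin2.
have lip : forall th t : R, `|f th - f t| <= r * (`|cos th - cos t| + `|sin th - sin t|).
  move=> th t; rewrite ler_norml; apply/andP; split.
    have := fw_lip (uc t) (uc th); rewrite /= (distrC (cos t)) (distrC (sin t)).
    rewrite -/(f t) -/(f th); slra.
  have := fw_lip (uc th) (uc t); rewrite /= -/(f t) -/(f th); slra.
have cont : continuous f.
  move=> th; apply/cvgrPdist_lt => e e0.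
  have e1 : 0 < e / (4 * r) by apply: divr_gt0 => //; slra.
  move/cvgrPdist_lt: (@continuous_cos _ th) => /(_ _ e1) hc.
  move/cvgrPdist_lt: (@continuous_sin _ th) => /(_ _ e1) hs.
  move: hc hs; apply: filterS2 => t t1 t2.
  apply: le_lt_trans (lip th t) _.
  have h3 : r * (`|cos th - cos t| + `|sin th - sin t|) < r * (e / (4 * r) + e / (4 * r)).
    by rewrite ltr_pM2l //; apply: ltrD.
  have h4 : r * (e / (4 * r) + e / (4 * r)) = e / 2 by field; rewrite gt_eqF.
  rewrite h4 in h3; slra.
have hpi : - pi <= (pi : R) by have := pi_ge0 R; slra.
have [c hc hmin] := EVT_min hpi (continuous_subspaceT cont).
exists (cos c, sin c); split; first exact: uc.
apply/le_anti/andP; split; last first.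
  apply: ge_inf; first by exists 0 => _ [v hv <-]; exact: fw_ge0.
  by exists (cos c, sin c).
apply: lb_le_inf; first by exists (f c), (cos c, sin c).
move=> _ [[w1 w2] hw <-].
have hw' : w1 ^+ 2 + w2 ^+ 2 = 1 := hw.
have hb : -1 <= w1 <= 1.
  rewrite -ler_norml; apply: abs_le_of_sq => //; rewrite expr1n; have := sqr_ge0 w2; lra.
have [hapi ca] := acos_def hb.
have /andP[a0 api] := hapi.
have sa : sin (acos w1) = `|w2|.
  rewrite sin_acos //; have -> : 1 - w1 ^+ 2 = w2 ^+ 2 by lra.
  by rewrite sqrtr_sqr.
have pi0 := pi_ge0 R.
case: (lerP 0 w2) => hw2.
  have := hmin (acos w1); rewrite /f ca sa ger0_norm // => h; apply: h.
  by rewrite in_itv /=; apply/andP; split; lra.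
have := hmin (- acos w1); rewrite /f cosN sinN ca sa ltr0_norm // opprK => h; apply: h.
by rewrite in_itv /=; apply/andP; split; lra.
Qed.

Lemma final : separates K x0 r.
Proof.
split; [|split].
- change (r^-1 * Ifl <= 1/2).
  have h := Ifl_le.
  have : r^-1 * Ifl <= r^-1 * (eps0 * r) by rewrite ler_wpM2l // invr_ge0 ltW.
  rewrite mulrCA mulVf ?mulr1 ?gt_eqF //; slra.
- exact: opt_exists.
- move=> v hv; rewrite beta_r; exact: dc hv.
Qed.

End Main1.


Theorem lemma4p14 (R : realType) (x0 : R * R) (r0 eps0 : R)
  (K : set (R * R)) :
  0 < r0 -> 0 < eps0 -> eps0 < 1/100 ->
  rel_closed K (eball x0 r0) -> K x0 ->
  (forall x r, K x -> eball x0 (r0 / 2) x -> 0 < r -> r <= r0 / 2 ->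
     beta_bil K x r <= eps0) ->
  separates K x0 (r0 / 10).
Proof.
move=> h0 he0 he1 hK Kx0 hb.
have hr : 0 < r0 / 10 by apply: divr_gt0.
have e10 : r0 = 10 * (r0 / 10) by field.
have e2 : r0 / 2 = 5 * (r0 / 10) by field.
have hb' : forall x rho, K x -> edist x x0 < 5 * (r0 / 10) -> 0 < rho -> rho <= 5 * (r0 / 10) ->
    beta_bil K x rho <= eps0.
  move=> x rho Kx hx h1 h2; apply: hb => //; rewrite ?e2 //.
have hK' : rel_closed K (eball x0 (10 * (r0 / 10))) by rewrite -e10.
have F := @final R x0 (r0 / 10) eps0 K.
by apply: F.
Qed.
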